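(* Consider online binary classification with abstention with $d$ experts and arbitrary abstention costs $c_t$, and run AdaHedge with abstention. Then for every expert $i\in\{1,\dots,d\}$, $$\sum_{t=1}^T\big((1-b_t)\ell_t(y_t^\star)+b_tc_t\big)\le\sum_{t=1}^T\ell_t(y_t^i)+\inf_{\eta>0}\Big\{\frac{\ln d}{\eta}+\sum_{t=1}^T\big((1-b_t)\ell_t(y_t^\star)+c_tb_t+\eta v_t-\ell_t(\hat y_t)\big)\Big\}+\frac43\ln d+2,$$ where $v_t=\mathbb E_{i\sim\hat{\mathbf p}_t}\big[(\ell_t(\hat y_t)-\ell_t(y_t^i))^2\big]$.
   Context: Online classification with abstention: in each round $t=1,\dots,T$, the learner observes expert predictions $y_t^1,\dots,y_t^d\in[-1,1]$, predicts $y'_t\in[-1,1]\cup\{*\}$ ($*$ = abstain), the environment reveals $y_t\in\{-1,1\}$ and an abstention cost $c_t$, and the learner suffers $\ell_t(y'_t)=\frac12(1-y_ty'_t)$ if $y'_t\in[-1,1]$ and $c_t$ if $y'_t=*$. For expert $i$ its loss is $\ell_t(y_t^i)=\frac12(1-y_ty_t^i)\in[0,1]$. AdaHedge: with $L_{t,i}=\sum_{s<t}\ell_s(y_s^i)$, weights $\hat p_{t,i}\propto\exp(-\eta_tL_{t,i})$, where $\eta_t=\ln d/\Delta_{t-1}$ (and for $\Delta_{t-1}=0$ the weights are uniform over the experts minimizing $L_{t,i}$), $\Delta_t=\sum_{s\le t}\delta_s$, $\delta_s=h_s-m_s$, $h_s=\sum_i\hat p_{s,i}\ell_s(y_s^i)$,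 $m_s=-\frac1{\eta_s}\ln\sum_i\hat p_{s,i}e^{-\eta_s\ell_s(y_s^i)}$ (with $m_s=\min_{i:\hat p_{s,i}>0}\ell_s(y_s^i)$ when $\eta_s=\infty$). AdaHedge with abstention (Algorithm 2): in round $t$ obtain $\hat{\mathbf p}_t$ from AdaHedge, set $\hat y_t=\sum_i\hat p_{t,i}y_t^i$, $y_t^\star=\mathrm{sign}(\hat y_t)$, $b_t=1-|\hat y_t|$; predict $y'_t=y_t^\star$ with probability $1-b_t$ and abstain with probability $b_t$; then feed the expert losses $\ell_t(y_t^i)$ to AdaHedge. The quantity $(1-b_t)\ell_t(y_t^\star)+b_tc_t$ is the learner's expected loss in round $t$. *)

(* Defs.v *)
From HB Require Import structures.
From mathcomp Require Import all_boot all_order all_algebra.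
From mathcomp Require Import all_classical all_reals all_analysis.
Set Implicit Arguments. Unset Strict Implicit. Unset Printing Implicit Defensive.
Import Order.TTheory GRing.Theory Num.Theory.
Local Open Scope ring_scope.
Local Open Scope classical_set_scope.

Section AdaHedgeAbst.
Variables (R : realType) (d : nat).
(* Rounds are indexed 0,1,...,T-1 (round t here = round t+1 of the paper).
   ye t i : prediction of expert i in round t;  y t : label of round t. *)
Variables (ye : nat -> 'I_d -> R) (y : nat -> R).

Definition loss (t : nat) (z : R) : R := (1 - y t * z) / 2.

Definition cumL (t : nat) (i : 'I_d) : R := \sum_(s < t) loss s (ye s i).

(* AdaHedge weights in round t, given Delta_{t-1} = Dt.
   If Dt = 0 (eta = +oo): uniform over the minimizers of L_t;
   otherwise: proportional to exp(-eta L_{t,i}) with eta = ln d / Dt. *)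
Definition eta_of (Dt : R) : R := ln d%:R / Dt.

Definition is_leader (t : nat) (i : 'I_d) : bool := [forall j, cumL t i <= cumL t j].

Definition weights (Dt : R) (t : nat) (i : 'I_d) : R :=
  if Dt == 0 then
    (if is_leader t i then (#|[pred j | is_leader t j]|%:R)^-1 else 0)
  else
    expR (- eta_of Dt * cumL t i) / \sum_(j < d) expR (- eta_of Dt * cumL t j).

Definition hmix (Dt : R) (t : nat) : R := \sum_(i < d) weights Dt t i * loss t (ye t i).

(* For eta = +oo, m_t = min over the support of the weights of the expert
   losses; losses lie in [0,1], so 1 is a neutral default for this min. *)
Definition mmix (Dt : R) (t : nat) : R :=
  if Dt == 0 then
    \big[Num.min/1]_(i < d | 0 < weights Dt t i) loss t (ye t i)
  else
    - (eta_of Dt)^-1 *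
      ln (\sum_(i < d) weights Dt t i * expR (- eta_of Dt * loss t (ye t i))).

Definition delta (Dt : R) (t : nat) : R := hmix Dt t - mmix Dt t.

Fixpoint Dcum (t : nat) : R :=
  match t with
  | 0 => 0
  | t'.+1 => Dcum t' + delta (Dcum t') t'
  end.

Definition phat (t : nat) (i : 'I_d) : R := weights (Dcum t) t i.

Definition yhat (t : nat) : R := \sum_(i < d) phat t i * ye t i.
Definition ystar (t : nat) : R := Num.sg (yhat t).
Definition babst (t : nat) : R := 1 - `|yhat t|.

Definition vvar (t : nat) : R :=
  \sum_(i < d) phat t i * (loss t (yhat t) - loss t (ye t i)) ^+ 2.

End AdaHedgeAbst.

(* Main.v *)
Require Import Defs.
From HB Require Import structures.
From mathcomp Require Import all_boot all_order all_algebra.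
From mathcomp Require Import all_classical all_reals all_analysis.
From mathcomp Require Import ring lra.
Import Order.TTheory GRing.Theory Num.Theory.
Import numFieldNormedType.Exports.
Local Open Scope ring_scope.
Local Open Scope classical_set_scope.
Section E.
Variable R : realType.

Lemma mono_deriv (f df : R -> R) (a : R) :
  (forall x : R, is_derive x (1:R) f (df x)) -> (forall x, a < x -> 0 <= df x) ->
  forall x, a <= x -> f a <= f x.
Proof.
move=> fd dge x ax.
apply: (@ger0_derive1_ndecry R f a) => //.
- move=> z; rewrite in_itv/= andbT => az.
  by rewrite derive1E (@derive_val _ _ _ _ _ _ _ (fd z)); apply: dge.
- have cf : continuous (f : R -> R).
    move=> z.
  apply/differentiable_continuous/derivable1_diffP.
  by case: (fd z).
  exact: continuous_subspaceT.
Qed.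

Lemma expG (w : R) : 0 <= w -> 1 <= expR w * (1 - w + w * w / 2).
Proof.
move=> w0.
have := @mono_deriv (fun u => expR u * (1 - u + u * u / 2))
   (fun u => expR u * (u * u / 2)) 0.
rewrite /= expR0 mul0r subr0 mul0r addr0 mul1r; apply => //.
- move=> x; apply: is_derive_eq. by rewrite /GRing.scale /=; field.
- move=> x x0; have := expR_ge0 x; nra.
Qed.

Lemma expNle (u : R) : u <= 0 -> expR u <= 1 + u + u * u / 2.
Proof.
move=> u0; have := @expG (-u); rewrite oppr_ge0 => /(_ u0).
have e1 := expRxMexpNx_1 u; have e2 := expR_gt0 u; have e3 := expR_gt0 (-u).
nra.
Qed.

Lemma expB (u : R) : 0 <= u -> expR u * (1 - u / 3) <= 1 + 2 * u / 3 + u * u / 6.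
Proof.
move=> u0.
have g2 : forall x : R, 0 <= 1/3 - (1/3 - x/3) * expR x.
  move=> x; have := expR_ge1Dx (-x); have e1 := expRxMexpNx_1 x.
  have e2 := expR_gt0 x; nra.
have g1 : forall x : R, 0 <= x -> 0 <= 2/3 + x/3 - (2/3 - x/3) * expR x.
  move=> x x0.
  have := @mono_deriv (fun u => 2/3 + u/3 - (2/3 - u/3) * expR u)
     (fun u => 1/3 - (1/3 - u/3) * expR u) 0.
  rewrite /= expR0 mul0r subr0 mulr1 addr0 subrr; apply => //.
  - move=> z; apply: is_derive_eq; by rewrite /GRing.scale /=; field.
have := @mono_deriv (fun u => 1 + 2 * u / 3 + u * u / 6 - (1 - u/3) * expR u)
   (fun u => 2/3 + u/3 - (2/3 - u/3) * expR u) 0.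
move=> H.
have {}H : 0 <= 1 + 2 * u / 3 + u * u / 6 - (1 - u / 3) * expR u.
  have -> : 0 = 1 + 2 * 0 / 3 + 0 * 0 / 6 - (1 - 0 / 3) * expR (0:R).
    by rewrite expR0; field.
  apply: H => //.
  - move=> z; apply: is_derive_eq; by rewrite /GRing.scale /=; field.
  - by move=> z /ltW; apply: g1.
move: H.
lra.
Qed.

Lemma exp_bern (eta u : R) : 0 < eta < 3 -> u <= eta ->
  expR u <= 1 + u + u * u * (3 / (2 * (3 - eta))).
Proof.
move=> /andP[e0 e3] ue.
have c0 : 1/2 <= 3 / (2 * (3 - eta)).
  rewrite ler_pdivlMr ?mulr_gt0 ?subr_gt0 //. lra.
have cc : 3 / (2 * (3 - eta)) * (3 - eta) = 3/2.
  by field; rewrite subr_eq0; apply/eqP => h; move: e3; rewrite h ltxx.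
have uu : 0 <= u * u by rewrite -expr2 sqr_ge0.
case: (lerP u 0) => u0.
  have := @expNle u u0; nra.
have := @expB u (ltW u0).
set c := 3 / (2 * (3 - eta)) in c0 cc *.
have e2 := expR_gt0 u.
move=> H.
have h3 : 0 < 3 - u by lra.
have : expR u * (3 - u) <= (1 + u + u * u * c) * (3 - u).
  have : c * (3 - u) >= 3/2 by nra.
  nra.
move=> H2; rewrite -(ler_pM2r h3); exact: H2.
Qed.

Variable d : nat.

Lemma jensen_exp (p x : 'I_d -> R) : (forall i, 0 <= p i) -> \sum_i p i = 1 ->
  expR (\sum_i p i * x i) <= \sum_i p i * expR (x i).
Proof.
move=> p0 p1; set mu := \sum_i p i * x i.
have H i : p i * (expR mu * (1 + (x i - mu))) <= p i * expR (x i).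
  apply: ler_wpM2l => //.
  have E : expR (x i) = expR mu * expR (x i - mu) by rewrite -expRD addrC subrK.
  rewrite E; have := expR_ge1Dx (x i - mu); have := expR_gt0 mu; nra.
apply: le_trans (ler_sum _ (fun i _ => H i)).
rewrite (eq_bigr (fun i => expR mu * p i + expR mu * (p i * x i) - expR mu * mu * p i));
  last by move=> i _; ring.
rewrite sumrB big_split /= -!mulr_sumr p1 -/mu.
have -> : expR mu * 1 + expR mu * mu - expR mu * mu * 1 = expR mu by ring.
by [].
Qed.

Lemma fin_round (p l : 'I_d -> R) (eta : R) : 0 < eta ->
  (forall i, 0 <= p i) -> \sum_i p i = 1 -> (forall i, 0 <= l i <= 1) ->
  let h := \sum_i p i * l i in
  let m := - eta^-1 * ln (\sum_i p i * expR (- eta * l i)) in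
  let v := \sum_i p i * (h - l i) ^+ 2 in
  [/\ 0 <= h - m, h - m <= 1 & h - m <= eta * v / 2 + eta * (h - m) / 3].
Proof.
move=> e0 p0 p1 l01 h m v.
set S := \sum_i p i * expR (- eta * l i).
have Sge : expR (- eta * h) <= S.
  apply: le_trans (@jensen_exp p (fun i => - eta * l i) p0 p1).
  rewrite ler_expR /h mulr_sumr; rewrite le_eqVlt; apply/orP; left; apply/eqP/eq_bigr => i _; ring.
have S0 : 0 < S by apply: lt_le_trans Sge; exact: expR_gt0.
have Sle : S <= 1.
  rewrite -p1 /S; apply: ler_sum => i _; apply: ler_piMr => //.
  rewrite expR_le1; have := l01 i; nra.
have h1 : h <= 1.
  rewrite -p1 /h; apply: ler_sum => i _; apply: ler_piMr => //; by case/andP: (l01 i).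
have lnS1 : - eta * h <= ln S.
  by rewrite -[X in X <= _]expRK ler_ln ?posrE ?expR_gt0.
have lnS2 : ln S <= 0 by rewrite ln_le0.
have hm : h - m = h + eta^-1 * ln S by rewrite /m; ring.
have ei : eta * eta^-1 = 1 by rewrite mulfV // gt_eqF.
have ei0 : 0 < eta^-1 by rewrite invr_gt0.
have d0 : 0 <= h - m.
  rewrite hm; have : eta^-1 * (- eta * h) <= eta^-1 * ln S by rewrite ler_pM2l.
  have -> : eta^-1 * (- eta * h) = - h by rewrite mulrA mulrN [eta^-1 * _]mulrC ei mulN1r.
  lra.
have d1 : h - m <= 1.
  rewrite hm; have : eta^-1 * ln S <= 0 by rewrite pmulr_rle0.
  lra.
have v0 : 0 <= v by rewrite /v sumr_ge0 // => i _; rewrite mulr_ge0 // sqr_ge0.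
split => //.
case: (lerP 3 eta) => e3.
  have : 0 <= eta * v / 2 by rewrite divr_ge0 // mulr_ge0 // ltW.
  nra.
set c := 3 / (2 * (3 - eta)).
pose u i := eta * (h - l i).
have uB i : u i <= eta.
  rewrite /u; have := l01 i; have : 0 <= h by rewrite /h sumr_ge0 // => j _; rewrite mulr_ge0 //; by case/andP: (l01 j).
  nra.
set S' := \sum_i p i * expR (u i).
have S'E : S' = expR (eta * h) * S.
  rewrite /S' /S mulr_sumr; apply: eq_bigr => i _.
  by rewrite /u mulrCA -expRD; congr (_ * expR _); ring.
have S'le : S' <= 1 + c * eta ^+ 2 * v.
  have H i : p i * expR (u i) <= p i * (1 + u i + u i * u i * c).
    by apply: ler_wpM2l => //; apply: exp_bern; [rewrite e0 e3|].
  apply: le_trans (ler_sum _ (fun i _ => H i)) _.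
  rewrite (eq_bigr (fun i => p i + (eta * h) * p i - eta * (p i * l i) + (c * eta ^+ 2) * (p i * (h - l i) ^+ 2))); last by move=> i _; rewrite /u; ring.
  rewrite big_split sumrB big_split /= -!mulr_sumr p1 -/h -/v.
  have -> : 1 + eta * h * 1 - eta * h = 1 by ring.
  by [].
have lnS' : ln S' = eta * (h - m).
  rewrite S'E lnM ?posrE ?expR_gt0 // expRK hm mulrDr mulrA ei mul1r.
  by [].
have : eta * (h - m) <= c * eta ^+ 2 * v.
  rewrite -lnS'.
  have -> : S' = 1 + (S' - 1) by ring.
  apply: le_trans (le_ln1Dx _) _.
    by rewrite S'E; have := expR_gt0 (eta * h); nra.
  lra.
have cc : c * (3 - eta) = 3/2.
  by rewrite /c; field; rewrite subr_eq0; apply/eqP => h3; move: e3; rewrite h3 ltxx.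
move=> H.
have H2 : eta * ((h - m) * (3 - eta)) <= eta * (3/2 * eta * v).
  rewrite -cc; nra.
move: H2; rewrite ler_pM2l // => H3.
nra.
Qed.

Lemma conv_exp (r z : R) : 0 <= r <= 1 -> expR (r * z) <= 1 - r + r * expR z.
Proof.
move=> /andP[r0 r1]; set mu := r * z.
have h1 := expR_ge1Dx (- mu).
have h2 := expR_ge1Dx (z - mu).
have E1 : expR (- mu) * expR mu = 1 by rewrite mulrC expRxMexpNx_1.
have E2 : expR z = expR mu * expR (z - mu) by rewrite -expRD addrC subrK.
have e0 := expR_gt0 mu.
have A : expR mu * (1 - mu) <= 1 by nra.
have B : expR mu * (1 + (z - mu)) <= expR z by rewrite E2; nra.
have : (1 - r) * (expR mu * (1 - mu)) + r * (expR mu * (1 + (z - mu))) <= 1 - r + r * expR z.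
  have r2 : 0 <= 1 - r by lra.
  nra.
have -> : (1 - r) * (expR mu * (1 - mu)) + r * (expR mu * (1 + (z - mu))) = expR mu.
  by rewrite /mu; ring.
by [].
Qed.

Lemma W_gt0 (L : 'I_d -> R) (a : R) : (0 < d)%N -> 0 < \sum_j expR (- a * L j).
Proof.
move=> d0; have j0 : 'I_d := Ordinal d0.
rewrite (bigD1 j0) //=; apply: ltr_pwDl; first exact: expR_gt0.
by apply: sumr_ge0 => j _; exact: expR_ge0.
Qed.

Lemma phi_mono (L : 'I_d -> R) (a b : R) : (0 < d)%N -> 0 < a -> a <= b ->
  - b^-1 * ln (\sum_j expR (- b * L j)) + b^-1 * ln d%:R
  <= - a^-1 * ln (\sum_j expR (- a * L j)) + a^-1 * ln d%:R.
Proof.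
move=> d0 a0 ab.
have b0 : 0 < b by apply: lt_le_trans ab.
set Wa := \sum_j expR (- a * L j); set Wb := \sum_j expR (- b * L j).
have Wa0 : 0 < Wa by apply: W_gt0.
have Wb0 : 0 < Wb by apply: W_gt0.
set D : R := d%:R.
have D0 : 0 < D by rewrite /D ltr0n.
set r := a / b.
have r01 : 0 <= r <= 1.
  apply/andP; split; first by rewrite /r divr_ge0 // ltW.
  by rewrite /r ler_pdivrMr // mul1r.
have rb : r * b = a by rewrite /r mulfVK // gt_eqF.
set M := ln Wb - ln D.
have key : Wa <= D * expR (r * M).
  have H j : expR (- a * L j) <= expR (r * M) * (1 - r + r * (expR (- b * L j) * D / Wb)).
    have -> : expR (- a * L j) = expR (r * M) * expR (r * (- b * L j - M)).
      by rewrite -expRD; congr expR; rewrite -rb; ring.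
    rewrite ler_pM2l ?expR_gt0 //.
    have -> : expR (- b * L j) * D / Wb = expR (- b * L j - M).
      rewrite expRB /M expRB !lnK ?posrE //.
      by field; rewrite ?gt_eqF.
    exact: conv_exp.
  apply: le_trans (ler_sum _ (fun j _ => H j)) _.
  rewrite -mulr_sumr.
  rewrite (eq_bigr (fun j => (1 - r) + (r * D / Wb) * expR (- b * L j))); last first.
    by move=> j _; field; rewrite gt_eqF.
  rewrite big_split /= -mulr_sumr -/Wb sumr_const card_ord.
  have -> : (1 - r) *+ d = (1 - r) * D by rewrite /D mulr_natr.
  have -> : (1 - r) * D + r * D / Wb * Wb = D.
    by field; rewrite ?gt_eqF.
  by rewrite mulrC.
have lnk : ln Wa <= ln D + r * M.
  have : ln Wa <= ln (D * expR (r * M)) by rewrite ler_ln ?posrE ?mulr_gt0 ?expR_gt0.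
  by rewrite lnM ?posrE ?expR_gt0 // expRK.
have ia : a * a^-1 = 1 by rewrite mulfV // gt_eqF.
have ib : b * b^-1 = 1 by rewrite mulfV // gt_eqF.
have ia0 : 0 < a^-1 by rewrite invr_gt0.
have : a^-1 * ln Wa <= a^-1 * (ln D + r * M) by rewrite ler_pM2l.
have -> : a^-1 * (ln D + r * M) = a^-1 * ln D + b^-1 * M.
  rewrite /r; field; rewrite !gt_eqF //.
rewrite /M; lra.
Qed.
End E.


Section Alg.
Variables (R : realType) (d : nat) (ye : nat -> 'I_d -> R) (y : nat -> R).

Local Notation cumL := (cumL ye y).
Local Notation D := (Dcum ye y).
Local Notation phat := (phat ye y).
Local Notation lo t i := (loss y t (ye t i)).
Local Notation W t eta := (\sum_j expR (- eta * cumL t j)).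
Definition Hc (t : nat) : R := \sum_(s < t) hmix ye y (D s) s.
Definition Vc (t : nat) : R := \sum_(s < t) vvar ye y s.

Lemma cumLS t i : cumL t.+1 i = cumL t i + lo t i.
Proof. by rewrite /Defs.cumL big_ord_recr. Qed.

Lemma DS t : D t.+1 = D t + delta ye y (D t) t.
Proof. by []. Qed.

Lemma HS t : Hc t.+1 = Hc t + hmix ye y (D t) t.
Proof. by rewrite /Hc big_ord_recr. Qed.

Lemma VS t : Vc t.+1 = Vc t + vvar ye y t.
Proof. by rewrite /Vc big_ord_recr. Qed.

Lemma loss01 t i : -1 <= ye t i <= 1 -> (y t = 1 \/ y t = -1) -> 0 <= lo t i <= 1.
Proof.
move=> /andP[h1 h2] hy; rewrite /loss; case: hy => ->; apply/andP; split; lra.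
Qed.

Lemma weights_fin Dt t i : Dt != 0 ->
  weights ye y Dt t i = expR (- eta_of d Dt * cumL t i) / W t (eta_of d Dt).
Proof. by move=> h; rewrite /weights (negbTE h). Qed.

Lemma weights_zero t i : (0 < d)%N -> (forall j, cumL t j = cumL t i) ->
  weights ye y 0 t i = d%:R^-1.
Proof.
move=> d0 eq; rewrite /weights eqxx.
have L : forall k, is_leader ye y t k.
  by move=> k; apply/forallP => j; rewrite /is_leader (eq k) (eq j).
rewrite L; congr (_ ^-1); congr (_ %:R).
rewrite -[RHS]card_ord; apply: eq_card => k; by rewrite !inE L.
Qed.

Section Zero.
Variable t : nat.
Hypothesis d0 : (0 < d)%N.
Hypothesis eqL : forall j k, cumL t j = cumL t k.
Hypothesis l01 : forall j, 0 <= lo t j <= 1.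

Lemma wz j : weights ye y 0 t j = d%:R^-1.
Proof. by apply: weights_zero => // k; apply: eqL. Qed.

Lemma dpos : 0 < d%:R^-1 :> R.
Proof. by rewrite invr_gt0 ltr0n. Qed.

Lemma mz_le j : mmix ye y 0 t <= lo t j.
Proof.
rewrite /mmix eqxx (bigD1 j) /=; last by rewrite wz dpos.
by rewrite ge_min lexx.
Qed.

Lemma mz_ge (x : R) : x <= 1 -> (forall j, x <= lo t j) -> x <= mmix ye y 0 t.
Proof.
move=> x1 xl; rewrite /mmix eqxx.
elim/big_rec: _ => // j r _ IH; by rewrite le_min xl IH.
Qed.

Lemma hz : hmix ye y 0 t = d%:R^-1 * \sum_j lo t j.
Proof. by rewrite /hmix mulr_sumr; apply: eq_bigr => j _; rewrite wz. Qed.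

Lemma dz_expr : hmix ye y 0 t - mmix ye y 0 t = \sum_j d%:R^-1 * (lo t j - mmix ye y 0 t).
Proof.
rewrite hz mulr_sumr -[in RHS]mulr_sumr sumrB sumr_const card_ord.
have dd : d%:R^-1 * (mmix ye y 0 t *+ d) = mmix ye y 0 t.
  rewrite -(mulr_natr (mmix ye y 0 t)) mulrCA mulVf ?mulr1 // pnatr_eq0 -lt0n //.
by rewrite mulrBr dd mulr_sumr.
Qed.

Lemma dz_ge0 : 0 <= hmix ye y 0 t - mmix ye y 0 t.
Proof.
rewrite dz_expr; apply: sumr_ge0 => j _; rewrite mulr_ge0 ?subr_ge0 ?mz_le //.
Qed.

Lemma dz_le1 : hmix ye y 0 t - mmix ye y 0 t <= 1.
Proof.
have m0 : 0 <= mmix ye y 0 t by apply: mz_ge => // j; case/andP: (l01 j).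
have h1 : hmix ye y 0 t <= 1.
  rewrite hz; have : \sum_j lo t j <= d%:R.
    have : \sum_j lo t j <= \sum_(j < d) (1:R) by apply: ler_sum => j _; case/andP: (l01 j).
    by rewrite sumr_const card_ord.
  move=> H; have dd : d%:R^-1 * d%:R = 1 :> R by rewrite mulVf // pnatr_eq0 -lt0n.
  by have := ler_wpM2l (ltW dpos) H; rewrite dd.
lra.
Qed.

Lemma dz_eq0 : hmix ye y 0 t - mmix ye y 0 t = 0 -> forall j, lo t j = mmix ye y 0 t.
Proof.
rewrite dz_expr => /eqP; rewrite psumr_eq0 => [/allP H j|j _]; last first.
  by rewrite mulr_ge0 ?subr_ge0 ?mz_le // ltW // dpos.
have := H j (mem_index_enum _); rewrite /= mulf_eq0 invr_eq0 pnatr_eq0 gtn_eqF //=.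
by rewrite subr_eq0 => /eqP.
Qed.

Lemma dz_d1 : d = 1%N -> hmix ye y 0 t - mmix ye y 0 t = 0.
Proof.
move=> d1.
have j0 : 'I_d := Ordinal d0.
have all_eq : forall j, lo t j = lo t j0.
  move=> j; congr (lo t _); apply/val_inj => /=.
  have h1 : (j < 1)%N := eq_ind d (fun n => (j < n)%N) (ltn_ord j) 1%N d1.
  have h2 : (j0 < 1)%N := eq_ind d (fun n => (j0 < n)%N) (ltn_ord j0) 1%N d1.
  by move: h1 h2; case: (nat_of_ord j) => [|?]; case: (nat_of_ord j0).
have m1 : mmix ye y 0 t = lo t j0.
  apply/le_anti/andP; split; first exact: mz_le.
  by apply: mz_ge; [case/andP: (l01 j0)| move=> j; rewrite all_eq].
apply/eqP; rewrite subr_eq0; apply/eqP.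
rewrite hz m1 (eq_bigr (fun=> lo t j0)); last by move=> j _; rewrite all_eq.
by rewrite sumr_const card_ord -(mulr_natr (lo t j0)) mulrCA mulVf ?mulr1 // pnatr_eq0 -lt0n.
Qed.
End Zero.

Lemma W_pos t eta : (0 < d)%N -> 0 < W t eta.
Proof. by move=> d0; apply: W_gt0. Qed.

Lemma wf_ge0 Dt t i : 0 <= weights ye y Dt t i.
Proof.
rewrite /weights; case: (Dt == 0).
  by case: (is_leader _ _ _ _); rewrite ?invr_ge0 ?ler0n.
by rewrite divr_ge0 ?expR_ge0 // sumr_ge0 // => j _; rewrite expR_ge0.
Qed.

Lemma wf_sum Dt t : (0 < d)%N -> Dt != 0 -> \sum_i weights ye y Dt t i = 1.
Proof.
move=> d0 h; rewrite (eq_bigr _ (fun i _ => weights_fin Dt t i h)) -mulr_suml mulfV //.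
by rewrite gt_eqF // W_pos.
Qed.

Lemma loss_yhat t : \sum_i phat t i = 1 -> loss y t (yhat ye y t) = hmix ye y (D t) t.
Proof.
move=> p1; rewrite /loss /yhat /hmix /Defs.phat.
rewrite [in RHS](eq_bigr (fun i => weights ye y (D t) t i / 2 - y t / 2 * (weights ye y (D t) t i * ye t i))); last by move=> i _; rewrite /loss; ring.
rewrite sumrB -mulr_suml -mulr_sumr; rewrite /Defs.phat in p1; rewrite p1; ring.
Qed.

Lemma eta_pos (Dt : R) : (1 < d)%N -> 0 < Dt -> 0 < eta_of d Dt.
Proof. by move=> d1 D0; rewrite /eta_of divr_gt0 // ln_gt0 // ltr1n. Qed.

Lemma fin_delta t : (1 < d)%N -> 0 < D t -> (forall j, 0 <= lo t j <= 1) ->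
  [/\ 0 <= delta ye y (D t) t, delta ye y (D t) t <= 1 &
   delta ye y (D t) t <= eta_of d (D t) * vvar ye y t / 2 + eta_of d (D t) * delta ye y (D t) t / 3].
Proof.
move=> d1 D0 l01.
have d0 : (0 < d)%N by apply: ltn_trans d1.
have Dn0 : D t != 0 by rewrite gt_eqF.
have := @fin_round R d (weights ye y (D t) t) (fun i => lo t i) (eta_of d (D t)) (@eta_pos (D t) d1 D0)
   (fun i => wf_ge0 _ _ i) (@wf_sum (D t) t d0 Dn0) l01.
have -> : delta ye y (D t) t = hmix ye y (D t) t - mmix ye y (D t) t by [].
have -> : vvar ye y t = \sum_i weights ye y (D t) t i * (hmix ye y (D t) t - lo t i) ^+ 2.
  by rewrite /vvar loss_yhat // /Defs.phat wf_sum.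
by rewrite /mmix (negbTE Dn0).
Qed.

Lemma fin_m t eta : (0 < d)%N -> D t != 0 -> eta = eta_of d (D t) ->
  mmix ye y (D t) t = - eta^-1 * (ln (W t.+1 eta) - ln (W t eta)).
Proof.
move=> d0 Dn0 ->; rewrite /mmix (negbTE Dn0); congr (_ * _).
rewrite -ln_div ?posrE ?W_pos //; congr ln.
rewrite (eq_bigr (fun i => expR (- eta_of d (D t) * cumL t.+1 i) / W t (eta_of d (D t)))).
  by rewrite -mulr_suml.
move=> i _; rewrite weights_fin // mulrAC -expRD cumLS; congr (expR _ / _); ring.
Qed.

Lemma phi_ub (L : 'I_d -> R) (eta : R) i : 0 < eta ->
  - eta^-1 * ln (\sum_j expR (- eta * L j)) <= L i.
Proof.
move=> e0.
have d0 : (0 < d)%N by apply: leq_ltn_trans (ltn_ord i).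
have H : expR (- eta * L i) <= \sum_j expR (- eta * L j).
  rewrite (bigD1 i) //= lerDl; apply: sumr_ge0 => j _; exact: expR_ge0.
have : - eta * L i <= ln (\sum_j expR (- eta * L j)).
  by rewrite -[X in X <= _]expRK ler_ln ?posrE ?expR_gt0 ?W_gt0.
set S := ln _ => H2.
have ei : eta^-1 * eta = 1 by rewrite mulVf // gt_eqF.
have ei0 : 0 < eta^-1 by rewrite invr_gt0.
have : eta^-1 * (- eta * L i) <= eta^-1 * S by rewrite ler_pM2l.
rewrite mulrA mulrN ei; lra.
Qed.

Lemma phi_lb (L : 'I_d -> R) (eta c : R) : (0 < d)%N -> 0 < eta -> (forall j, c <= L j) ->
  c - eta^-1 * ln d%:R <= - eta^-1 * ln (\sum_j expR (- eta * L j)).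
Proof.
move=> d0 e0 cL.
have H : \sum_j expR (- eta * L j) <= d%:R * expR (- eta * c).
  have : \sum_j expR (- eta * L j) <= \sum_(j < d) expR (- eta * c).
    apply: ler_sum => j _; rewrite ler_expR; have := cL j; nra.
  by rewrite sumr_const card_ord mulr_natl.
have : ln (\sum_j expR (- eta * L j)) <= ln d%:R + - eta * c.
  rewrite -[X in _ <= _ + X]expRK -lnM ?posrE ?expR_gt0 ?ltr0n //.
  by rewrite ler_ln ?posrE ?W_gt0 ?mulr_gt0 ?expR_gt0 ?ltr0n.
set S := ln _ => H2.
have ei : eta^-1 * eta = 1 by rewrite mulVf // gt_eqF.
have ei0 : 0 < eta^-1 by rewrite invr_gt0.
have : eta^-1 * S <= eta^-1 * (ln d%:R + - eta * c) by rewrite ler_pM2l.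
rewrite mulrDr mulrA mulrN ei; lra.
Qed.

Definition Inv (t : nat) : Prop :=
  ((D t = 0 /\ forall j, cumL t j = Hc t) \/
   (0 < D t /\ (1 < d)%N /\
    Hc t <= - (eta_of d (D t))^-1 * ln (W t (eta_of d (D t))) + 2 * D t))
  /\ D t ^+ 2 <= ln d%:R * Vc t + (2/3 * ln d%:R + 1) * D t.

Lemma etaK (X : R) : (1 < d)%N -> 0 < X -> (eta_of d X)^-1 * ln d%:R = X.
Proof.
move=> d1 X0; have l0 : 0 < ln (d%:R : R) by rewrite ln_gt0 // ltr1n.
rewrite /eta_of invf_div mulfVK // gt_eqF //.
Qed.

Lemma etaM (X : R) : (1 < d)%N -> 0 < X -> eta_of d X * X = ln d%:R.
Proof. by move=> d1 X0; rewrite /eta_of mulfVK // gt_eqF. Qed.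

Lemma vvar_ge0 t : 0 <= vvar ye y t.
Proof. by rewrite /vvar sumr_ge0 // => i _; rewrite mulr_ge0 ?wf_ge0 ?sqr_ge0. Qed.

Lemma Inv0 : Inv 0.
Proof.
split; last by rewrite /= /Vc big_ord0 expr0n /= mulr0 mulr0 addr0.
by left; split => // j; rewrite /Hc /Defs.cumL !big_ord0.
Qed.

Lemma InvS t : (0 < d)%N -> (forall j, 0 <= lo t j <= 1) -> Inv t -> Inv t.+1.
Proof.
move=> d0 l01 [[[Dt0 eqL]|[Dt0 [d1 HI]]] Q].
-
  have eqLL : forall j k, cumL t j = cumL t k by move=> j k; rewrite !eqL.
  have lnd0 : 0 <= ln (d%:R : R) by rewrite ln_ge0 // ler1n.
  have v0 := vvar_ge0 t.
  have lv0 : 0 <= ln d%:R * vvar ye y t by rewrite mulr_ge0.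
  have dl : D t.+1 = hmix ye y 0 t - mmix ye y 0 t by rewrite DS Dt0 add0r.
  have dz0 : 0 <= hmix ye y 0 t - mmix ye y 0 t by apply: dz_ge0.
  have dz1 : hmix ye y 0 t - mmix ye y 0 t <= 1 by apply: dz_le1.
  rewrite /Inv dl HS VS Dt0.
  move: Q; rewrite Dt0 expr0n /= mulr0 addr0 => Q.
  split; last first.
    have : (hmix ye y 0 t - mmix ye y 0 t) ^+ 2 <= hmix ye y 0 t - mmix ye y 0 t.
      by rewrite expr2; nra.
    nra.
  case: (eqVneq (hmix ye y 0 t - mmix ye y 0 t) 0) => [e0|ne0].
    left; split => // j.
    have lj : lo t j = mmix ye y 0 t by apply: dz_eq0.
    move/eqP: e0; rewrite subr_eq0 => /eqP e0.
    by rewrite cumLS eqL lj e0.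
  right.
  have dpos : 0 < hmix ye y 0 t - mmix ye y 0 t by rewrite lt_neqAle eq_sym ne0.
  have d1 : (1 < d)%N.
    case: (ltngtP 1 d) => // [|d1]; first by rewrite ltnS leqn0 => /eqP d00; move: d0; rewrite d00.
    by move: ne0; rewrite dz_d1 ?eqxx // => k; apply: eqLL.
  split => //; split => //.
  set dd := hmix ye y 0 t - mmix ye y 0 t in dz0 dz1 ne0 dpos *.
  have e0 : 0 < eta_of d dd by apply: eta_pos.
  have := @phi_lb (cumL t.+1) (eta_of d dd) (Hc t + mmix ye y 0 t) d0 e0.
  rewrite etaK //.
  have : forall j, Hc t + mmix ye y 0 t <= cumL t.+1 j.
    move=> j; rewrite cumLS eqL lerD2l; by apply: mz_le.
  move=> H /(_ H); rewrite /dd; lra.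
-
  have [dl0 dl1 bern] := @fin_delta t d1 Dt0 l01.
  have Dn0 : D t != 0 by rewrite gt_eqF.
  have mE := @fin_m t (eta_of d (D t)) d0 Dn0 erefl.
  set dl := delta ye y (D t) t in dl0 dl1 bern.
  have hE : hmix ye y (D t) t = mmix ye y (D t) t + dl by rewrite /dl /delta; ring.
  have D'E : D t.+1 = D t + dl by rewrite DS.
  have D'pos : 0 < D t.+1 by rewrite D'E; lra.
  have e0 : 0 < eta_of d (D t) by apply: eta_pos.
  have e1 : 0 < eta_of d (D t.+1) by apply: eta_pos.
  have eM := @etaM (D t) d1 Dt0.
  rewrite /Inv HS VS; split; last first.
    have v0 := vvar_ge0 t.
    rewrite D'E.
    have H1 : 2 * D t * dl <= ln d%:R * vvar ye y t + 2/3 * ln d%:R * dl.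
      rewrite -eM.
      have := ler_wpM2l (ltW Dt0) bern; nra.
    have H2 : dl ^+ 2 <= dl by rewrite expr2; nra.
    have -> : (D t + dl) ^+ 2 = D t ^+ 2 + 2 * D t * dl + dl ^+ 2 by ring.
    nra.
  right; split => //; split => //.
  have le_eta : eta_of d (D t.+1) <= eta_of d (D t).
    rewrite /eta_of ler_pM2l ?ln_gt0 ?ltr1n // lef_pV2 ?posrE // D'E; lra.
  have := @phi_mono R d (cumL t.+1) (eta_of d (D t.+1)) (eta_of d (D t)) d0 e1 le_eta.
  rewrite !etaK //.
  move: HI; rewrite hE mE mulrBr D'E; lra.
Qed.

Lemma Inv_all T : (0 < d)%N -> (forall t i, (t < T)%N -> 0 <= lo t i <= 1) ->
  forall t, (t <= T)%N -> Inv t.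
Proof.
move=> d0 l01; elim => [|t IH] tT; first exact: Inv0.
apply: InvS => //; first by move=> i; apply: l01.
by apply: IH; apply: ltnW.
Qed.

Lemma phat_sum t : (0 < d)%N -> Inv t -> \sum_i phat t i = 1.
Proof.
move=> d0 [[[Dt0 eqL]|[Dt0 _]] _].
  rewrite /Defs.phat Dt0 (eq_bigr (fun=> d%:R^-1)).
    by rewrite sumr_const card_ord -(mulr_natr (d%:R^-1)) mulVf // pnatr_eq0 -lt0n.
  by move=> i _; apply: weights_zero => // j; rewrite !eqL.
by rewrite /Defs.phat wf_sum // gt_eqF.
Qed.

Lemma regret_final T i : Inv T -> Hc T <= cumL T i + 2 * D T.
Proof.
move=> [[[Dt0 eqL]|[Dt0 [d1 HI]]] _].
  by rewrite Dt0 mulr0 addr0 eqL.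
have e0 : 0 < eta_of d (D T) by apply: eta_pos.
have := @phi_ub (cumL T) (eta_of d (D T)) i e0; lra.
Qed.
End Alg.

Lemma sqrt_free (R : realType) (Dd Ld V B eta : R) : 0 <= Dd -> 0 <= Ld -> 0 <= V -> 0 <= B ->
  0 < eta -> Dd ^+ 2 <= Ld * V + B * Dd -> 2 * Dd - 2 * B <= Ld / eta + eta * V.
Proof.
move=> D0 L0 V0 B0 e0 Q.
set x := Ld / eta.
have xe : x * eta = Ld by rewrite /x mulfVK // gt_eqF.
have x0 : 0 <= x by rewrite /x divr_ge0 // ltW.
have S0 : 0 <= x + eta * V by rewrite addr_ge0 // mulr_ge0 // ltW.
case: (lerP Dd B) => DB; first lra.
have H1 : (Dd - B) ^+ 2 <= x * eta * V by rewrite xe; nra.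
have H2 : 4 * (x * eta * V) <= (x + eta * V) ^+ 2.
  have : 0 <= (x - eta * V) ^+ 2 by rewrite sqr_ge0.
  nra.
have H3 : (2 * Dd - 2 * B) ^+ 2 <= (x + eta * V) ^+ 2 by nra.
have H4 : 0 <= 2 * Dd - 2 * B by lra.
by move: H3; rewrite ler_sqr ?nnegrE.
Qed.


Theorem mainTheorem9 (R : realType) (d T : nat)
  (ye : nat -> 'I_d -> R) (y : nat -> R) (c : nat -> R) :
  (0 < d)%N ->
  (forall t i, (t < T)%N -> -1 <= ye t i <= 1) ->
  (forall t, (t < T)%N -> y t = 1 \/ y t = -1) ->
  forall i : 'I_d,
    \sum_(t < T) ((1 - babst ye y t) * loss y t (ystar ye y t) + babst ye y t * c t)
    <= \sum_(t < T) loss y t (ye t i)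
       + inf [set (ln d%:R / eta
                   + \sum_(t < T) ((1 - babst ye y t) * loss y t (ystar ye y t)
                                   + c t * babst ye y t + eta * vvar ye y t
                                   - loss y t (yhat ye y t)))
             | eta in [set eta : R | 0 < eta]]
       + 4 / 3 * ln d%:R + 2.
Proof.
move=> d0 hye hy i.
have l01 : forall t j, (t < T)%N -> 0 <= loss y t (ye t j) <= 1.
  by move=> t j tT; apply: loss01; [apply: hye | apply: hy].
have Iall := @Inv_all R d ye y T d0 l01.
have IT := Iall T (leqnn T).
have reg := @regret_final R d ye y T i IT.
have yh : \sum_(t < T) loss y t (yhat ye y t) = Hc R d ye y T.
  rewrite /Hc; apply: eq_bigr => t _; apply: loss_yhat; apply: phat_sum => //.
  by apply: Iall; apply: ltnW.
have [QD Q] : 0 <= Dcum ye y T /\ Dcum ye y T ^+ 2 <= ln d%:R * Vc R d ye y T + (2/3 * ln d%:R + 1) * Dcum ye y T.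
  by case: IT => [[[-> _]|[/ltW ? _]] Q]; split.
have lnd0 : 0 <= ln (d%:R : R) by rewrite ln_ge0 // ler1n.
have V0 : 0 <= Vc R d ye y T by rewrite /Vc sumr_ge0 // => t _; exact: vvar_ge0.
set A := \sum_(t < T) ((1 - babst ye y t) * loss y t (ystar ye y t) + babst ye y t * c t).
set Li := \sum_(t < T) loss y t (ye t i).
have LiE : Li = cumL ye y T i by [].
set E := [set _ | eta in _].
have : A - Li - (4 / 3 * ln d%:R + 2) <= inf E.
  apply: lb_le_inf.
    by exists (ln d%:R / 1 + \sum_(t < T) ((1 - babst ye y t) * loss y t (ystar ye y t)
                                   + c t * babst ye y t + 1 * vvar ye y t
                                   - loss y t (yhat ye y t))); exists 1 => //=.
  move=> z [eta /= e0 <-].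
  have sf := @sqrt_free R _ _ _ (2/3 * ln d%:R + 1) eta QD lnd0 V0 ltac:(lra) e0 Q.
  rewrite big_split /= sumrN !big_split /= -mulr_sumr yh.
  have -> : \sum_(t < T) (c t * babst ye y t) = \sum_(t < T) (babst ye y t * c t).
    by apply: eq_bigr => t _; rewrite mulrC.
  rewrite -big_split /= -/A -/(Vc R d ye y T).
  move: reg; rewrite -LiE. lra.
lra.
Qed.
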